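(* If $F$ is a non-abelian free metabelian Lie algebra over a field $k$, then $\mathrm{Fit}(F)=F^2$.
   Context: A Lie algebra is metabelian if $(a\circ b)\circ(c\circ d)=0$ identically; free metabelian means free in the variety of metabelian Lie $k$-algebras. $F^2$ is the ideal spanned by all products $a\circ b$; $\mathrm{Fit}(F)$ (Fitting radical) is the ideal generated by all elements lying in nilpotent ideals of $F$. *)

(* Defs.v *)
(* Lie algebras over a field K, modelled as a K-module
   (lmodType K, possibly infinite dimensional) together with a bracket. *)
From HB Require Import structures.
From mathcomp Require Import all_boot all_order all_algebra.
Set Implicit Arguments. Unset Strict Implicit. Unset Printing Implicit Defensive.
Import GRing.Theory.
Local Open Scope ring_scope.

Section Lie.
Variable K : fieldType.

Definition is_lie (L : lmodType K) (br : L -> L -> L) : Prop :=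
  [/\ (forall a x y (c : K), br (c *: x + y) a = c *: br x a + br y a),
      (forall a x y (c : K), br a (c *: x + y) = c *: br a x + br a y),
      (forall x, br x x = 0) &
      (forall x y z, br x (br y z) + br y (br z x) + br z (br x y) = 0)].

Definition metabelian (L : lmodType K) (br : L -> L -> L) : Prop :=
  forall a b c d, br (br a b) (br c d) = 0.

Definition lie_hom (L M : lmodType K) (brL : L -> L -> L) (brM : M -> M -> M)
  (g : L -> M) : Prop :=
  (forall (c : K) x y, g (c *: x + y) = c *: g x + g y) /\
  (forall x y, g (brL x y) = brM (g x) (g y)).

Definition free_metabelian (L : lmodType K) (br : L -> L -> L) : Prop :=
  is_lie br /\ metabelian br /\
  exists (X : Type) (iota : X -> L),
    forall (M : lmodType K) (brM : M -> M -> M),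
      is_lie brM -> metabelian brM ->
      forall f : X -> M,
        exists g : L -> M,
          [/\ lie_hom br brM g, (forall i, g (iota i) = f i) &
              (forall h : L -> M, lie_hom br brM h ->
                 (forall i, h (iota i) = f i) -> forall x, h x = g x)].

Inductive sq_span (L : lmodType K) (br : L -> L -> L) : L -> Prop :=
  | sq_br a b : sq_span br (br a b)
  | sq_0 : sq_span br 0
  | sq_lin (c : K) x y : sq_span br x -> sq_span br y -> sq_span br (c *: x + y).

Definition is_ideal (L : lmodType K) (br : L -> L -> L) (I : L -> Prop) : Prop :=
  [/\ I 0, (forall (c : K) x y, I x -> I y -> I (c *: x + y)) &
      (forall a x, I x -> I (br a x) /\ I (br x a))].

(* lower central series of I viewed as a Lie algebra:
   C^0 = I, C^{n+1} = span [I, C^n] *)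
Inductive lcs (L : lmodType K) (br : L -> L -> L) (I : L -> Prop) : nat -> L -> Prop :=
  | lcs_base x : I x -> lcs br I 0 x
  | lcs_br n a b : I a -> lcs br I n b -> lcs br I n.+1 (br a b)
  | lcs_0 n : lcs br I n.+1 0
  | lcs_lin n (c : K) x y : lcs br I n.+1 x -> lcs br I n.+1 y ->
      lcs br I n.+1 (c *: x + y).

Definition nilpotent_ideal (L : lmodType K) (br : L -> L -> L) (I : L -> Prop) :=
  is_ideal br I /\ exists n, forall x, lcs br I n x -> x = 0.

Inductive gen_ideal (L : lmodType K) (br : L -> L -> L) (S : L -> Prop) : L -> Prop :=
  | gi_base x : S x -> gen_ideal br S x
  | gi_0 : gen_ideal br S 0
  | gi_lin (c : K) x y : gen_ideal br S x -> gen_ideal br S y ->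
      gen_ideal br S (c *: x + y)
  | gi_brl a x : gen_ideal br S x -> gen_ideal br S (br a x)
  | gi_brr a x : gen_ideal br S x -> gen_ideal br S (br x a).

Definition Fit (L : lmodType K) (br : L -> L -> L) : L -> Prop :=
  gen_ideal br (fun x => exists I, nilpotent_ideal br I /\ I x).
End Lie.

(* Main.v *)
From HB Require Import structures.
Require Import Defs.
From mathcomp Require Import all_boot all_order all_algebra.
From Stdlib Require Import ClassicalEpsilon.
From mathcomp Require Import ring.
Import GRing.Theory.
Local Open Scope ring_scope.
Set Implicit Arguments. Unset Strict Implicit.

Section Basics.
Variables (K : fieldType) (L : lmodType K) (br : L -> L -> L).
Hypothesis HL : is_lie br.

Lemma br0l a : br 0 a = 0.
Proof.
case: HL => Hl _ _ _.
have := Hl a 0 0 1; rewrite !scale1r addr0 -{1}[br 0 a]addr0.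
by move/addrI.
Qed.
Lemma br0r a : br a 0 = 0.
Proof.
case: HL => _ Hr _ _.
have := Hr a 0 0 1; rewrite !scale1r addr0 -{1}[br a 0]addr0.
by move/addrI.
Qed.
Lemma brDl a x y : br (x + y) a = br x a + br y a.
Proof. by case: HL => Hl _ _ _; rewrite -{1}[x]scale1r Hl !scale1r. Qed.
Lemma brDr a x y : br a (x + y) = br a x + br a y.
Proof. by case: HL => _ Hr _ _; rewrite -{1}[x]scale1r Hr !scale1r. Qed.
Lemma brZl a (c : K) x : br (c *: x) a = c *: br x a.
Proof. by case: HL => Hl _ _ _; rewrite -[c *: x]addr0 Hl br0l addr0. Qed.
Lemma brZr a (c : K) x : br a (c *: x) = c *: br a x.
Proof. by case: HL => _ Hr _ _; rewrite -[c *: x]addr0 Hr br0r addr0. Qed.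
End Basics.

Section Hom.
Variables (K : fieldType) (L M : lmodType K) (br : L -> L -> L) (brM : M -> M -> M).
Variable g : L -> M.
Hypothesis Hg : lie_hom br brM g.
Lemma hom0 : g 0 = 0.
Proof.
case: Hg => Hl _; have := Hl 1 0 0; rewrite !scale1r addr0 -{1}[g 0]addr0.
by move/addrI.
Qed.
Lemma homD x y : g (x + y) = g x + g y.
Proof. by case: Hg => Hl _; rewrite -{1}[x]scale1r Hl !scale1r. Qed.
Lemma homZ (c : K) x : g (c *: x) = c *: g x.
Proof. by case: Hg => Hl _; rewrite -[c *: x]addr0 Hl hom0 addr0. Qed.
Lemma homB x y : g (x - y) = g x - g y.
Proof. by rewrite -scaleN1r homD homZ scaleN1r. Qed.
End Hom.

Section SubAlg.
Variables (K : fieldType) (L : lmodType K) (br : L -> L -> L) (S0 : L -> Prop).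
Definition Hyp := [/\ S0 0, (forall (c : K) x y, S0 x -> S0 y -> S0 (c *: x + y)) &
  (forall a b, S0 a -> S0 b -> S0 (br a b))].
Definition S x := Hyp -> S0 x.

Definition Sb : pred L := fun x => if excluded_middle_informative (S x) then true else false.
Lemma SbP x : Sb x <-> S x.
Proof. by rewrite /Sb; case: excluded_middle_informative. Qed.
Lemma Slin (c : K) x y : S x -> S y -> S (c *: x + y).
Proof. by move=> Hx Hy H; case: (H) => _ Hl _; apply: Hl; [apply: Hx|apply: Hy]. Qed.
Lemma Sbr a b : S a -> S b -> S (br a b).
Proof. by move=> Hx Hy H; case: (H) => _ _ Hb; apply: Hb; [apply: Hx|apply: Hy]. Qed.
Lemma Sclosed : subsemimod_closed Sb.
Proof.
split; [split|].
- by apply/SbP => -[].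
- move=> x y /SbP Hx /SbP Hy; apply/SbP.
  by rewrite -[x]scale1r; apply: Slin.
- move=> a v /SbP Hv; apply/SbP.
  by rewrite -[a *: v]addr0; apply: Slin => // -[].
Qed.
End SubAlg.
Definition ST (K : fieldType) (L : lmodType K) (br : L -> L -> L) (S0 : L -> Prop) :=
  {x : L | Sb br S0 x}.
HB.instance Definition _ (K : fieldType) (L : lmodType K) (br : L -> L -> L) (S0 : L -> Prop) :=
  [isSub of ST br S0 for @sval L (Sb br S0)].
HB.instance Definition _ (K : fieldType) (L : lmodType K) (br : L -> L -> L) (S0 : L -> Prop) :=
  [Choice of ST br S0 by <:].
HB.instance Definition _ (K : fieldType) (L : lmodType K) (br : L -> L -> L) (S0 : L -> Prop) :=
  GRing.SubChoice_isSubLmodule.Build K L (Sb br S0) (ST br S0) (Sclosed br S0).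
Section SubAlg2.
Variables (K : fieldType) (L : lmodType K) (br : L -> L -> L) (S0 : L -> Prop).
Local Notation ST := (ST br S0).
Local Notation Sb := (Sb br S0).

Lemma brS_proof (u w : ST) : Sb (br (val u) (val w)).
Proof. by apply/SbP; apply: Sbr; apply/SbP; apply: valP. Qed.
Definition brS (u w : ST) : ST := exist _ (br (val u) (val w)) (brS_proof u w).

Lemma brS_lie : is_lie br -> is_lie brS.
Proof.
case=> Hl Hr Ha Hj; split.
- by move=> a x y c; apply: val_inj; rewrite /= Hl.
- by move=> a x y c; apply: val_inj; rewrite /= Hr.
- by move=> x; apply: val_inj; rewrite /= Ha.
- by move=> x y z; apply: val_inj; rewrite /= Hj.
Qed.
Lemma brS_met : metabelian br -> metabelian brS.
Proof. by move=> Hm a b c d; apply: val_inj; rewrite /= Hm. Qed.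
End SubAlg2.

Section Free.
Variables (K : fieldType) (L : lmodType K) (br : L -> L -> L).
Hypothesis HL : is_lie br.
Hypothesis Hmb : metabelian br.
Variables (X : Type) (iota : X -> L).
Hypothesis U : forall (M : lmodType K) (brM : M -> M -> M),
      is_lie brM -> metabelian brM ->
      forall f : X -> M,
        exists g : L -> M,
          [/\ lie_hom br brM g, (forall i, g (iota i) = f i) &
              (forall h : L -> M, lie_hom br brM h ->
                 (forall i, h (iota i) = f i) -> forall x, h x = g x)].

Lemma hom_uniq (M : lmodType K) (brM : M -> M -> M) :
  is_lie brM -> metabelian brM -> forall h1 h2 : L -> M,
  lie_hom br brM h1 -> lie_hom br brM h2 ->
  (forall i, h1 (iota i) = h2 (iota i)) -> forall x, h1 x = h2 x.
Proof.
move=> HM Hm h1 h2 H1 H2 E x.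
have [g [_ _ Hu]] := U HM Hm (fun i => h2 (iota i)).
by rewrite (Hu h1 H1 E) (Hu h2 H2 (fun i => erefl)).
Qed.

Lemma GL (S0 : L -> Prop) : S0 0 ->
  (forall (c : K) x y, S0 x -> S0 y -> S0 (c *: x + y)) ->
  (forall a b, S0 a -> S0 b -> S0 (br a b)) ->
  (forall i, S0 (iota i)) -> forall x, S0 x.
Proof.
move=> H0 Hlin Hbr Si x.
have HH : Hyp br S0 by split.
have Sbi i : Sb br S0 (iota i) by apply/SbP => _; apply: Si.
have [g [Hg Hgi _]] := U (@brS_lie K L br S0 HL) (@brS_met K L br S0 Hmb)
   (fun i => exist _ (iota i) (Sbi i) : ST br S0).
have Hh : lie_hom br br (fun y => val (g y)).
  case: Hg => Hg1 Hg2; split.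
  - by move=> c a b; rewrite Hg1.
  - by move=> a b; rewrite Hg2.
have Hid : lie_hom br br id by split.
have E := hom_uniq HL Hmb Hh Hid (fun i => congr1 val (Hgi i)) x.
rewrite /= in E; rewrite -E.
by have /SbP := valP (g x); apply.
Qed.

Definition brK (a b : K^o) : K^o := 0.
Lemma brK_lie : is_lie brK.
Proof. by split=> *; rewrite /brK ?scaler0 ?addr0. Qed.
Lemma brK_met : metabelian brK.
Proof. by []. Qed.

Definition M2 : lmodType K := (K^o * K^o)%type.
Definition br2 (u w : M2) : M2 := (0, u.1 * w.2 - w.1 * u.2).
Lemma M2lin (c : K) (u w : M2) : c *: u + w = (c * u.1 + w.1, c * u.2 + w.2).
Proof. by []. Qed.
Lemma M2add (u w : M2) : u + w = (u.1 + w.1, u.2 + w.2).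
Proof. by []. Qed.
Lemma br2_lie : is_lie br2.
Proof.
split.
- move=> [a1 a2] [x1 x2] [y1 y2] c; rewrite /br2 !M2lin /=.
  by congr (_, _); rewrite /=; ring.
- move=> [a1 a2] [x1 x2] [y1 y2] c; rewrite /br2 !M2lin /=.
  by congr (_, _); rewrite /=; ring.
- by move=> [x1 x2]; rewrite /br2 /= subrr.
- move=> [x1 x2] [y1 y2] [z1 z2]; rewrite /br2 !M2add /=.
  by congr (_, _); rewrite /=; ring.
Qed.
Lemma br2_met : metabelian br2.
Proof. by move=> a b c d; rewrite /br2 /= !mul0r subrr. Qed.

Definition eqd (i j : X) : bool :=
  if excluded_middle_informative (i = j) then true else false.
Lemma eqdP i j : reflect (i = j) (eqd i j).
Proof. by rewrite /eqd; case: excluded_middle_informative => H; constructor. Qed.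

Definition lc (cs : seq (K * X)) : L := \sum_(p <- cs) p.1 *: iota p.2.

Lemma LA n (cs : seq (K * X)) : (size cs <= n)%N ->
  (forall t : X -> K, \sum_(p <- cs) p.1 * t p.2 = 0) -> lc cs = 0.
Proof.
elim: n cs => [|n IH] [|p0 r] //=; rewrite /lc ?big_nil // => Hs Ht.
set cs := p0 :: r.
have HC : \sum_(p <- cs | eqd p.2 p0.2) p.1 = 0.
  have := Ht (fun i => if eqd i p0.2 then 1 else 0).
  rewrite (bigID (fun p : K * X => eqd p.2 p0.2)) /=.
  have -> : \sum_(p <- cs | eqd p.2 p0.2) p.1 * (if eqd p.2 p0.2 then 1 else 0)
     = \sum_(p <- cs | eqd p.2 p0.2) p.1.
    by apply: eq_bigr => p Pp; rewrite Pp mulr1.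
  rewrite [X in _ + X]big1 ?addr0 // => p /negbTE Pp.
  by rewrite Pp mulr0.
rewrite (bigID (fun p : K * X => eqd p.2 p0.2)) /=.
have -> : \sum_(p <- cs | eqd p.2 p0.2) p.1 *: iota p.2 = 0.
  rewrite (eq_bigr (fun p => p.1 *: iota p0.2)); last first.
    by move=> p /eqdP ->.
  by rewrite -scaler_suml HC scale0r.
rewrite add0r -big_filter.
have := IH [seq p <- cs | ~~ eqd p.2 p0.2]; rewrite /lc; apply.
  rewrite /= (introT (eqdP _ _) erefl) /=.
  by rewrite size_filter; apply: leq_trans (count_size _ _) _.
move=> t; rewrite big_filter.
have := Ht t; rewrite (bigID (fun p : K * X => eqd p.2 p0.2)) /=.
rewrite (eq_bigr (fun p => p.1 * t p0.2)); last by move=> p /eqdP ->.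
by rewrite -mulr_suml HC mul0r add0r.
Qed.

Lemma factA x : exists cs, sq_span br (x - lc cs).
Proof.
apply: (GL (S0 := fun x => exists cs, sq_span br (x - lc cs))) => //.
- by exists [::]; rewrite /lc big_nil subr0; apply: sq_0.
- move=> c x1 y1 [cs1 H1] [cs2 H2].
  exists ([seq (c * p.1, p.2) | p <- cs1] ++ cs2).
  rewrite /lc big_cat big_map /= -/(lc cs1) -/(lc cs2).
  under eq_bigr => p _ do rewrite -scalerA.
  rewrite -scaler_sumr -/(lc cs1).
  have -> : c *: x1 + y1 - (c *: lc cs1 + lc cs2) = c *: (x1 - lc cs1) + (y1 - lc cs2).
    by rewrite scalerBr opprD addrACA.
  by apply: sq_lin.
- by move=> a b _ _; exists [::]; rewrite /lc big_nil subr0; apply: sq_br.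
- move=> i; exists [:: (1, i)]; rewrite /lc big_seq1 /= scale1r subrr.
  exact: sq_0.
Qed.

Lemma abel_sq (phi : L -> K^o) : lie_hom br brK phi ->
  forall s, sq_span br s -> phi s = 0.
Proof.
move=> Hp s; elim=> [a b||c x y _ Hx _ Hy].
- by case: Hp => _ ->.
- exact: hom0 Hp.
- by case: Hp => -> _; rewrite Hx Hy scaler0 addr0.
Qed.

Lemma abel_lc (phi : L -> K^o) : lie_hom br brK phi ->
  forall cs, phi (lc cs) = \sum_(p <- cs) p.1 * phi (iota p.2).
Proof.
move=> Hp; elim=> [|p cs IH]; rewrite /lc ?big_nil ?big_cons.
  exact: hom0 Hp.
by rewrite (homD Hp) (homZ Hp) -IH.
Qed.

Lemma claimD x : (forall phi : L -> K^o, lie_hom br brK phi -> phi x = 0) ->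
  sq_span br x.
Proof.
move=> H; have [cs Hs] := factA x.
have E : lc cs = 0.
  apply: (LA (leqnn _)) => t.
  have [g [Hg Hgi _]] := U brK_lie brK_met t.
  have := H g Hg; rewrite -[x](subrK (lc cs) x) (homD Hg) (abel_sq Hg Hs) add0r.
  by rewrite (abel_lc Hg); under eq_bigr => p _ do rewrite Hgi.
by rewrite E subr0 in Hs.
Qed.

Lemma two_elems : (exists a b : L, br a b <> 0) -> forall k : X, exists j, j <> k.
Proof.
move=> [a [b Hab]] k; apply: NNPP => Hn.
have Hall : forall j, j = k.
  by move=> j; apply: NNPP => Hjk; apply: Hn; exists j.
pose S := fun x => exists c : K, x = c *: iota k.
have HS : forall x, S x.
  apply: GL.
  - by exists 0; rewrite scale0r.
  - by move=> c x y [c1 ->] [c2 ->]; exists (c * c1 + c2); rewrite scalerDl scalerA.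
  - move=> _ _ [c1 ->] [c2 ->]; exists 0.
    case: HL => _ _ Ha _.
    by rewrite brZl // brZr // Ha !scaler0 scale0r.
  - by move=> i; exists 1; rewrite scale1r (Hall i).
apply: Hab; have [c1 ->] := HS a; have [c2 ->] := HS b.
case: HL => _ _ Ha _.
by rewrite brZl // brZr // Ha !scaler0.
Qed.

Lemma claimC (I : L -> Prop) x : nilpotent_ideal br I -> I x ->
  (exists a b : L, br a b <> 0) ->
  forall phi : L -> K^o, lie_hom br brK phi -> phi x = 0.
Proof.
move=> [[I0 Ilin Ibr] [n Hn]] Ix Hna phi Hp.
apply: NNPP => Ha.
have [k Hk] : exists k, phi (iota k) != 0.
  apply: NNPP => Hn'; apply: Ha.
  have Hz : lie_hom br brK (fun _ => (0 : K^o)).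
    by split=> *; rewrite /brK ?scaler0 ?addr0.
  have := hom_uniq brK_lie brK_met Hp Hz _ x; apply => i.
  by apply: NNPP => Hi; apply: Hn'; exists i; apply/eqP.
have [j Hj] := two_elems Hna k.
pose s := fun i => if eqd i j then (1 : K) else 0.
have [g [Hg Hgi _]] := U br2_lie br2_met (fun i => (phi (iota i), s i) : M2).
have Hfst : forall y, (g y).1 = phi y.
  have Hg1 : lie_hom br brK (fun y => (g y).1).
    case: Hg => Hg1 Hg2; split.
    - by move=> c a b; rewrite Hg1.
    - by move=> a b; rewrite Hg2.
  by apply: (hom_uniq brK_lie brK_met Hg1 Hp) => i; rewrite Hgi.
have key : forall y, phi y * (g x).2 - (g y).2 * phi x = 0.
  move=> y.
  pose z := fun m => iter m (br x) (br y x).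
  have Hz : forall m, lcs br I m (z m).
    elim=> [|m IH]; first by apply: lcs_base; case: (Ibr y x Ix).
    exact: lcs_br Ix IH.
  have Hgz : forall m, g (z m) = (0, phi x ^+ m * (phi y * (g x).2 - (g y).2 * phi x)).
    elim=> [|m IH].
      by rewrite /z /=; case: Hg => _ ->; rewrite /br2 !Hfst expr0 mul1r [phi x * _]mulrC.
    rewrite /z /= -/(z m); case: Hg => _ ->; rewrite IH /br2 /= mul0r subr0. by rewrite Hfst mulrA -exprS.
  have := Hgz n; rewrite (Hn _ (Hz n)) (hom0 Hg) => -[] /esym /eqP.
  rewrite mulf_eq0 expf_eq0 => /orP [/andP [_ /eqP] //|/eqP //].
have Hsk : s k = 0.
  by rewrite /s; case: eqdP => // E; case: Hj; rewrite E.
have := key (iota k); rewrite Hgi /= Hsk mul0r subr0 => /eqP.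
rewrite mulf_eq0 (negbTE Hk) /= => /eqP Hb.
have := key (iota j); rewrite Hgi /= Hb mulr0 sub0r /s.
case: eqdP => // _; rewrite mul1r => /eqP; rewrite oppr_eq0 => /eqP.
exact: Ha.
Qed.
End Free.

Section Easy.
Variables (K : fieldType) (L : lmodType K) (br : L -> L -> L).
Hypothesis HL : is_lie br.
Hypothesis Hmb : metabelian br.

Lemma sq_sq a b : sq_span br a -> sq_span br b -> br a b = 0.
Proof.
elim=> [a1 a2||c x y _ Hx _ Hy].
- elim=> [b1 b2||c x y _ Hx _ Hy]; first exact: Hmb.
  + exact: br0r.
  + by case: HL => _ Hr _ _; rewrite Hr Hx Hy scaler0 addr0.
- by move=> _; apply: br0l.
- by move=> Hb; case: HL => Hl _ _ _; rewrite Hl Hx // Hy // scaler0 addr0.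
Qed.

Lemma lcs0 (I : L -> Prop) y : lcs br I 0 y -> I y.
Proof. by move=> H; inversion H. Qed.

Lemma lcs1 m y : lcs br (sq_span br) m y -> m = 1%N -> y = 0.
Proof.
elim=> [x _|n a b Ha Hb _|n|n c x y' _ Hx _ Hy] E //.
- by case: n E Hb => // _ Hb; apply: sq_sq Ha (lcs0 Hb).
- by rewrite Hx // Hy // scaler0 addr0.
Qed.

Lemma sq_nil : nilpotent_ideal br (sq_span br).
Proof.
split.
  split; [exact: sq_0 | by move=> *; apply: sq_lin | by move=> a x _; split; apply: sq_br].
by exists 1%N => y H; apply: lcs1 H erefl.
Qed.
End Easy.

Theorem proposition2p3p2 (K : fieldType) (L : lmodType K) (br : L -> L -> L) :
  free_metabelian br ->
  (exists a b : L, br a b <> 0) ->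
  forall x : L, Fit br x <-> sq_span br x.
Proof.
move=> [HL [Hmb [X [iota U]]]] Hna x; split.
- elim=> [y [I [HI Iy]]||c y z _ Hy _ Hz|a y _ _|a y _ _].
  + apply: (claimD HL Hmb U) => phi Hp.
    exact: (claimC HL Hmb U HI Iy Hna Hp).
  + exact: sq_0.
  + exact: sq_lin.
  + exact: sq_br.
  + exact: sq_br.
- move=> Hx; apply: gi_base; exists (sq_span br); split => //.
  exact: sq_nil.
Qed.
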